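(* For $\alpha,\beta\in\mathbb{R}$, let $\mathfrak{z}$ be the center of $\mathfrak{g}(\alpha,\beta)$. The $10$-dimensional quotient Lie algebra $\mathfrak{g}(\alpha,\beta)/\mathfrak{z}$ is characteristically nilpotent if and only if $(\alpha,\beta)\neq(0,0)$.
   Context: For $\alpha,\beta\in\mathbb{R}$, $\mathfrak{g}(\alpha,\beta)$ is the $11$-dimensional real Lie algebra with basis $e_1,\dots,e_{11}$ whose nonzero brackets (up to skew-symmetry) are: $[e_1,e_i]=e_{i+1}$ for $2\le i\le 10$; $[e_2,e_3]=e_5+\alpha e_6$, $[e_2,e_4]=e_6+\alpha e_7$, $[e_2,e_5]=-e_7+(\alpha-\beta)e_8$, $[e_2,e_6]=-3e_8+(\alpha-2\beta)e_9$, $[e_2,e_7]=-2e_9-\tfrac14(5\alpha+7\beta)e_{10}+\tfrac1{16}(27\alpha^2+12\alpha\beta+\beta^2)e_{11}$, $[e_2,e_8]=2e_{10}-\tfrac14(23\alpha+\beta)e_{11}$, $[e_2,e_9]=-e_{11}$; $[e_3,e_4]=2e_7+\beta e_8$, $[e_3,e_5]=2e_8+\beta e_9$, $[e_3,e_6]=-e_9+\tfrac14(9\alpha-\beta)e_{10}-\tfrac1{16}(27\alpha^2+12\alpha\beta+\beta^2)e_{11}$, $[e_3,e_7]=-4e_{10}+\tfrac32(3\alpha-\beta)e_{11}$, $[e_3,e_8]=3e_{11}$; $[e_4,e_5]=3e_9-\tfrac14(9\alpha-5\beta)e_{10}+\tfrac1{16}(27\alpha^2+12\alpha\beta+\beta^2)e_{11}$,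 $[e_4,e_6]=3e_{10}-\tfrac14(9\alpha-5\beta)e_{11}$, $[e_4,e_7]=-7e_{11}$; $[e_5,e_6]=10e_{11}$; all other brackets $[e_i,e_j]$ with $i<j$ are zero. Its center is $\mathfrak{z}=\mathrm{span}\{e_{11}\}$. A Lie algebra is characteristically nilpotent if all its derivations are nilpotent. *)

(* Defs.v *)
From HB Require Import structures.
From mathcomp Require Import all_boot all_order all_algebra.
From mathcomp Require Import reals.

Set Implicit Arguments. Unset Strict Implicit. Unset Printing Implicit Defensive.
Import Order.TTheory GRing.Theory Num.Theory.
Local Open Scope ring_scope.

Section LieDefs.
Variable R : realType.

(* The basis vector e_k of R^11, with 1-based index k (1 <= k <= 11). *)
Definition E (k : nat) : 'rV[R]_11 := \row_(j < 11) (j == k.-1 :> nat)%:R.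

(* Nonzero brackets [e_i, e_j] for 1 <= i < j <= 11 (1-based), g(alpha,beta). *)
Definition bup (a b : R) (i j : nat) : 'rV[R]_11 :=
  if i == 1%N then (if (2 <= j <= 10)%N then E j.+1 else 0) else
  match i, j with
  | 2, 3 => E 5 + a *: E 6
  | 2, 4 => E 6 + a *: E 7
  | 2, 5 => - E 7 + (a - b) *: E 8
  | 2, 6 => - (3%:R *: E 8) + (a - 2%:R * b) *: E 9
  | 2, 7 => - (2%:R *: E 9) - ((5%:R * a + 7%:R * b) / 4%:R) *: E 10
            + ((27%:R * a ^+ 2 + 12%:R * a * b + b ^+ 2) / 16%:R) *: E 11
  | 2, 8 => 2%:R *: E 10 - ((23%:R * a + b) / 4%:R) *: E 11
  | 2, 9 => - E 11
  | 3, 4 => 2%:R *: E 7 + b *: E 8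
  | 3, 5 => 2%:R *: E 8 + b *: E 9
  | 3, 6 => - E 9 + ((9%:R * a - b) / 4%:R) *: E 10
            - ((27%:R * a ^+ 2 + 12%:R * a * b + b ^+ 2) / 16%:R) *: E 11
  | 3, 7 => - (4%:R *: E 10) + ((3%:R / 2%:R) * (3%:R * a - b)) *: E 11
  | 3, 8 => 3%:R *: E 11
  | 4, 5 => 3%:R *: E 9 - ((9%:R * a - 5%:R * b) / 4%:R) *: E 10
            + ((27%:R * a ^+ 2 + 12%:R * a * b + b ^+ 2) / 16%:R) *: E 11
  | 4, 6 => 3%:R *: E 10 - ((9%:R * a - 5%:R * b) / 4%:R) *: E 11
  | 4, 7 => - (7%:R *: E 11)
  | 5, 6 => 10%:R *: E 11
  | _, _ => 0
  end.

Definition cst (a b : R) (i j : nat) : 'rV[R]_11 :=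
  if (i < j)%N then bup a b i j else if (j < i)%N then - bup a b j i else 0.

Definition gbr (a b : R) (x y : 'rV[R]_11) : 'rV[R]_11 :=
  \sum_(i < 11) \sum_(j < 11) (x 0 i * y 0 j) *: cst a b i.+1 j.+1.

Definition center (a b : R) (z : 'rV[R]_11) : Prop :=
  forall x, gbr a b z x = 0.

(* Quotient g / span{e_11}: coordinates w.r.t. the images of e_1..e_10.
   proj is the canonical projection, lift a section of it. *)
Definition proj (v : 'rV[R]_11) : 'rV[R]_10 := \row_(j < 10) v 0 (widen_ord (leqnSn 10) j).
Definition lift (v : 'rV[R]_10) : 'rV[R]_11 :=
  \row_(j < 11) (if (j < 10)%N then v 0 (inord j) else 0).

Definition qbr (a b : R) (x y : 'rV[R]_10) : 'rV[R]_10 :=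
  proj (gbr a b (lift x) (lift y)).

End LieDefs.

(* Derivations of an n-dimensional algebra (R^n, br); a linear map is a
   matrix acting on row vectors on the right. *)
Definition is_derivation (R : pzRingType) (n : nat)
  (br : 'rV[R]_n -> 'rV[R]_n -> 'rV[R]_n) (D : 'M[R]_n) : Prop :=
  forall x y, br x y *m D = br (x *m D) y + br x (y *m D).

Definition nilpotent_mx (R : pzRingType) (n : nat) (D : 'M[R]_n) : Prop :=
  exists k : nat, D ^+ k = 0.

Definition char_nilpotent (R : pzRingType) (n : nat)
  (br : 'rV[R]_n -> 'rV[R]_n -> 'rV[R]_n) : Prop :=
  forall D : 'M[R]_n, is_derivation br D -> nilpotent_mx D.

(* Main.v *)
Require Import Defs.
From HB Require Import structures.
From mathcomp Require Import all_boot all_order all_algebra.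
From mathcomp Require Import reals.
From mathcomp Require Import ring lra zify.
Set Implicit Arguments. Unset Strict Implicit. Unset Printing Implicit Defensive.
Import Order.TTheory GRing.Theory Num.Theory.
Local Open Scope ring_scope.

Section Tab.
Variable R : realType.
Definition qup (a b : R) (i j k : nat) : R :=
  match i, j, k with
  | 0, 1, 2 => 1
  | 0, 2, 3 => 1
  | 0, 3, 4 => 1
  | 0, 4, 5 => 1
  | 0, 5, 6 => 1
  | 0, 6, 7 => 1
  | 0, 7, 8 => 1
  | 0, 8, 9 => 1
  | 1, 2, 4 => 1
  | 1, 2, 5 => a
  | 1, 3, 5 => 1
  | 1, 3, 6 => a
  | 1, 4, 6 => -1
  | 1, 4, 7 => (a - b)
  | 1, 5, 7 => - 3%:R
  | 1, 5, 8 => (a - 2%:R * b)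
  | 1, 6, 8 => - 2%:R
  | 1, 6, 9 => - ((5%:R * a + 7%:R * b) / 4%:R)
  | 1, 7, 9 => 2%:R
  | 2, 3, 6 => 2%:R
  | 2, 3, 7 => b
  | 2, 4, 7 => 2%:R
  | 2, 4, 8 => b
  | 2, 5, 8 => -1
  | 2, 5, 9 => ((9%:R * a - b) / 4%:R)
  | 2, 6, 9 => - 4%:R
  | 3, 4, 8 => 3%:R
  | 3, 4, 9 => - ((9%:R * a - 5%:R * b) / 4%:R)
  | 3, 5, 9 => 3%:R
  | _, _, _ => 0
  end.

Definition qcf (a b : R) (i j k : nat) : R :=
  if (i < j)%N then qup a b i j k else if (j < i)%N then - qup a b j i k else 0.

Lemma bupE (a b : R) (i j : nat) (k : 'I_11) : (i < j)%N -> (j < 10)%N -> (k < 10)%N ->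
  bup a b i.+1 j.+1 0 k = qup a b i j k.
Proof.
case: k => k hk /= ij j10 k10.
case: i ij => [|[|[|[|[|[|[|[|[|[|i]]]]]]]]]] ij; last by lia.
all: case: j ij j10 => [|[|[|[|[|[|[|[|[|[|j]]]]]]]]]] ij j10; try by lia.
all: case: k hk k10 => [|[|[|[|[|[|[|[|[|[|k]]]]]]]]]] hk k10; try by lia.
all: rewrite /bup /E /= !mxE /=; ring.
Qed.
End Tab.

Section S.
Variable R : realType.
Implicit Types a b : R.

Lemma cstE a b (i j : nat) (k : 'I_11) : (i < 10)%N -> (j < 10)%N -> (k < 10)%N ->
  cst a b i.+1 j.+1 0 k = qcf a b i j k.
Proof.
move=> hi hj hk; rewrite /cst /qcf !ltnS.
case: ltngtP => h; first by rewrite bupE.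
  by rewrite mxE bupE.
by subst; rewrite mxE.
Qed.

Lemma liftE (x : 'rV[R]_10) (i : 'I_10) : Defs.lift x 0 (widen_ord (leqnSn 10) i) = x 0 i.
Proof. by rewrite mxE /= ltn_ord inord_val. Qed.

Lemma liftE10 (x : 'rV[R]_10) : Defs.lift x 0 ord_max = 0.
Proof. by rewrite mxE /= ?ltnn. Qed.

Lemma sum11 (F : 'I_11 -> R) : F ord_max = 0 ->
  \sum_(i < 11) F i = \sum_(i < 10) F (widen_ord (leqnSn 10) i).
Proof. by move=> h; rewrite big_ord_recr /= h addr0. Qed.

Lemma qbrE a b x y (m : 'I_10) :
  qbr a b x y 0 m = \sum_(i < 10) \sum_(j < 10) x 0 i * y 0 j * qcf a b i j m.
Proof.
rewrite /qbr /gbr mxE summxE.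
under eq_bigr => i _ do rewrite summxE.
rewrite sum11; last by rewrite big1 // => k _; rewrite !mxE /= ?mulr0 ?mul0r.
apply: eq_bigr => i _; rewrite sum11; last by rewrite !mxE /= ?mulr0 ?mul0r.
apply: eq_bigr => j _; rewrite mxE !liftE cstE //=.
Qed.

Definition s10 (f : nat -> R) : R :=
  f 0%N + f 1%N + f 2%N + f 3%N + f 4%N + f 5%N + f 6%N + f 7%N + f 8%N + f 9%N.

Lemma sum10 (F : 'I_10 -> R) : \sum_(i < 10) F i = s10 (fun n => F (inord n)).
Proof.
rewrite (eq_bigr (fun i : 'I_10 => F (inord i))) => [|i _]; last by rewrite inord_val.
by rewrite /s10 !big_ord_recr big_ord0 /= add0r.
Qed.

Lemma rowmulE (u : 'rV[R]_10) (D : 'M[R]_10) m : (u *m D) 0 m = \sum_l u 0 l * D l m.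
Proof. by rewrite mxE. Qed.

Lemma dsum1 (c : R) (j0 : 'I_10) (q : 'I_10 -> R) :
  \sum_(j < 10) c * (delta_mx 0 j0 : 'rV[R]_10) 0 j * q j = c * q j0.
Proof.
rewrite (bigD1 j0) //= big1 ?addr0 => [|j nj]; first by rewrite mxE !eqxx mulr1.
by rewrite mxE (negbTE nj) andbF mulr0 mul0r.
Qed.

Lemma dsum2 (i0 : 'I_10) (T : 'I_10 -> R) :
  \sum_(i < 10) (delta_mx 0 i0 : 'rV[R]_10) 0 i * T i = T i0.
Proof.
rewrite (bigD1 i0) //= big1 ?addr0 => [|j nj]; first by rewrite mxE !eqxx mul1r.
by rewrite mxE (negbTE nj) andbF mul0r.
Qed.

Lemma dsum3 (i0 : 'I_10) (T : 'I_10 -> 'I_10 -> R) :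
  \sum_(i < 10) \sum_(j < 10) (delta_mx 0 i0 : 'rV[R]_10) 0 i * T i j = \sum_(j < 10) T i0 j.
Proof.
rewrite (bigD1 i0) //= [X in _ + X]big1 ?addr0 => [|j nj].
  by apply: eq_bigr => k _; rewrite mxE !eqxx mul1r.
by rewrite big1 // => k _; rewrite mxE (negbTE nj) andbF mul0r.
Qed.

Lemma addE (A B : 'rV[R]_10) m : (A + B) 0 m = A 0 m + B 0 m.
Proof. by rewrite mxE. Qed.

Lemma dsumA (i0 j0 : 'I_10) (q : 'I_10 -> 'I_10 -> R) :
  \sum_(i < 10) \sum_(j < 10) (delta_mx 0 i0 : 'rV[R]_10) 0 i * (delta_mx 0 j0 : 'rV[R]_10) 0 j * q i j = q i0 j0.
Proof. under eq_bigr => i _ do rewrite dsum1. by rewrite dsum2. Qed.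

Lemma dsumB (j0 : 'I_10) (u : 'I_10 -> R) (q : 'I_10 -> 'I_10 -> R) :
  \sum_(i < 10) \sum_(j < 10) u i * (delta_mx 0 j0 : 'rV[R]_10) 0 j * q i j = \sum_(i < 10) u i * q i j0.
Proof. by under eq_bigr => i _ do rewrite dsum1. Qed.

Lemma dsumC (i0 : 'I_10) (v : 'I_10 -> R) (q : 'I_10 -> 'I_10 -> R) :
  \sum_(i < 10) \sum_(j < 10) (delta_mx 0 i0 : 'rV[R]_10) 0 i * v j * q i j = \sum_(j < 10) v j * q i0 j.
Proof. under eq_bigr => i _ do under eq_bigr => j _ do rewrite -mulrA. by rewrite dsum3. Qed.

Definition dd (D : 'M[R]_10) (i k : nat) : R := D (inord i) (inord k).

Lemma deq a b (D : 'M[R]_10) : is_derivation (qbr a b) D ->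
  forall i j m, (i < 10)%N -> (j < 10)%N -> (m < 10)%N ->
  s10 (fun l => qcf a b i j l * dd D l m) =
  s10 (fun k => dd D i k * qcf a b k j m) + s10 (fun k => dd D j k * qcf a b i k m).
Proof.
move=> HD i j m hi hj hm.
have := congr1 (fun v : 'rV[R]_10 => v 0 (inord m)) (HD (delta_mx 0 (inord i)) (delta_mx 0 (inord j) : 'rV[R]_10)).
rewrite /= rowmulE addE !qbrE dsumB dsumC.
under eq_bigr => l _ do rewrite qbrE dsumA.
by rewrite -!rowE !sum10 /s10 /dd !inordK // !mxE.
Qed.
Definition EQN (a b : R) (d : nat -> nat -> R) := forall i j m, (i < 10)%N -> (j < 10)%N -> (m < 10)%N ->
  s10 (fun l => qcf a b i j l * d l m) =
  s10 (fun k => d i k * qcf a b k j m) + s10 (fun k => d j k * qcf a b i k m).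

Lemma core (a b : R) (d : nat -> nat -> R) : EQN a b d -> (a, b) <> (0, 0) ->
  forall i k, (k <= i)%N -> (i < 10)%N -> d i k = 0.
Proof.
move=> H ab.
have z9_0 : d 9 0 = 0.
{
  have e0 := H 0 8 0 isT isT isT.
  rewrite /s10 /qcf /= in e0.
  rewrite ?mul0r ?mulr0 ?add0r ?addr0 ?oppr0 ?mul1r ?mulr1 in e0.
  clear -e0; by repeat split; lra.
}
have [z8_0 z9_1] : d 8 0 = 0 /\ d 9 1 = 0.
{
  have e0 := H 0 7 0 isT isT isT.
  rewrite /s10 /qcf /= in e0.
  rewrite ?mul0r ?mulr0 ?add0r ?addr0 ?oppr0 ?mul1r ?mulr1 in e0.
  have e1 := H 0 8 1 isT isT isT.
  rewrite /s10 /qcf /= in e1.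
  rewrite ?mul0r ?mulr0 ?add0r ?addr0 ?oppr0 ?mul1r ?mulr1 in e1.
  clear -e0 e1; by repeat split; lra.
}
have [z7_0 [z8_1 z9_2]] : d 7 0 = 0 /\ d 8 1 = 0 /\ d 9 2 = 0.
{
  have e0 := H 0 6 0 isT isT isT.
  rewrite /s10 /qcf /= in e0.
  rewrite ?mul0r ?mulr0 ?add0r ?addr0 ?oppr0 ?mul1r ?mulr1 in e0.
  have e1 := H 0 7 1 isT isT isT.
  rewrite /s10 /qcf /= in e1.
  rewrite ?mul0r ?mulr0 ?add0r ?addr0 ?oppr0 ?mul1r ?mulr1 in e1.
  have e2 := H 0 8 2 isT isT isT.
  rewrite /s10 /qcf /= in e2.
  rewrite ?mul0r ?mulr0 ?add0r ?addr0 ?oppr0 ?mul1r ?mulr1 in e2.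
  clear -e0 e1 e2; by repeat split; lra.
}
have [z6_0 [z7_1 [z8_2 z9_3]]] : d 6 0 = 0 /\ d 7 1 = 0 /\ d 8 2 = 0 /\ d 9 3 = 0.
{
  have e0 := H 0 5 0 isT isT isT.
  rewrite /s10 /qcf /= in e0.
  rewrite ?mul0r ?mulr0 ?add0r ?addr0 ?oppr0 ?mul1r ?mulr1 in e0.
  have e1 := H 0 6 1 isT isT isT.
  rewrite /s10 /qcf /= in e1.
  rewrite ?mul0r ?mulr0 ?add0r ?addr0 ?oppr0 ?mul1r ?mulr1 in e1.
  have e2 := H 0 7 2 isT isT isT.
  rewrite /s10 /qcf /= in e2.
  rewrite ?mul0r ?mulr0 ?add0r ?addr0 ?oppr0 ?mul1r ?mulr1 in e2.
  have e3 := H 0 8 3 isT isT isT.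
  rewrite /s10 /qcf /= in e3.
  rewrite ?mul0r ?mulr0 ?add0r ?addr0 ?oppr0 ?mul1r ?mulr1 in e3.
  clear -e0 e1 e2 e3; by repeat split; lra.
}
have [z5_0 [z6_1 [z7_2 [z8_3 z9_4]]]] : d 5 0 = 0 /\ d 6 1 = 0 /\ d 7 2 = 0 /\ d 8 3 = 0 /\ d 9 4 = 0.
{
  have e0 := H 0 4 0 isT isT isT.
  rewrite /s10 /qcf /= in e0.
  rewrite ?mul0r ?mulr0 ?add0r ?addr0 ?oppr0 ?mul1r ?mulr1 in e0.
  have e1 := H 0 5 1 isT isT isT.
  rewrite /s10 /qcf /= in e1.
  rewrite ?mul0r ?mulr0 ?add0r ?addr0 ?oppr0 ?mul1r ?mulr1 in e1.
  have e2 := H 0 6 2 isT isT isT.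
  rewrite /s10 /qcf /= in e2.
  rewrite ?mul0r ?mulr0 ?add0r ?addr0 ?oppr0 ?mul1r ?mulr1 in e2.
  have e3 := H 0 7 3 isT isT isT.
  rewrite /s10 /qcf /= in e3.
  rewrite ?mul0r ?mulr0 ?add0r ?addr0 ?oppr0 ?mul1r ?mulr1 in e3.
  have e4 := H 0 8 4 isT isT isT.
  rewrite /s10 /qcf /= in e4.
  rewrite ?mul0r ?mulr0 ?add0r ?addr0 ?oppr0 ?mul1r ?mulr1 in e4.
  clear -e0 e1 e2 e3 e4; by repeat split; lra.
}
have [z4_0 [z5_1 [z6_2 [z7_3 [z8_4 z9_5]]]]] : d 4 0 = 0 /\ d 5 1 = 0 /\ d 6 2 = 0 /\ d 7 3 = 0 /\ d 8 4 = 0 /\ d 9 5 = 0.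
{
  have e0 := H 0 3 0 isT isT isT.
  rewrite /s10 /qcf /= in e0.
  rewrite ?mul0r ?mulr0 ?add0r ?addr0 ?oppr0 ?mul1r ?mulr1 in e0.
  have e1 := H 0 4 1 isT isT isT.
  rewrite /s10 /qcf /= in e1.
  rewrite ?mul0r ?mulr0 ?add0r ?addr0 ?oppr0 ?mul1r ?mulr1 in e1.
  have e2 := H 0 5 2 isT isT isT.
  rewrite /s10 /qcf /= in e2.
  rewrite ?mul0r ?mulr0 ?add0r ?addr0 ?oppr0 ?mul1r ?mulr1 in e2.
  have e3 := H 0 6 3 isT isT isT.
  rewrite /s10 /qcf /= in e3.
  rewrite ?mul0r ?mulr0 ?add0r ?addr0 ?oppr0 ?mul1r ?mulr1 in e3.
  have e4 := H 0 7 4 isT isT isT.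
  rewrite /s10 /qcf /= in e4.
  rewrite ?mul0r ?mulr0 ?add0r ?addr0 ?oppr0 ?mul1r ?mulr1 in e4.
  have e5 := H 0 8 5 isT isT isT.
  rewrite /s10 /qcf /= in e5.
  rewrite ?mul0r ?mulr0 ?add0r ?addr0 ?oppr0 ?mul1r ?mulr1 in e5.
  clear -e0 e1 e2 e3 e4 e5; by repeat split; lra.
}
have [z3_0 [z4_1 [z5_2 [z6_3 [z7_4 [z8_5 z9_6]]]]]] : d 3 0 = 0 /\ d 4 1 = 0 /\ d 5 2 = 0 /\ d 6 3 = 0 /\ d 7 4 = 0 /\ d 8 5 = 0 /\ d 9 6 = 0.
{
  have e0 := H 0 2 0 isT isT isT.
  rewrite /s10 /qcf /= in e0.
  rewrite ?mul0r ?mulr0 ?add0r ?addr0 ?oppr0 ?mul1r ?mulr1 in e0.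
  have e1 := H 0 3 1 isT isT isT.
  rewrite /s10 /qcf /= in e1.
  rewrite ?mul0r ?mulr0 ?add0r ?addr0 ?oppr0 ?mul1r ?mulr1 in e1.
  have e2 := H 0 4 2 isT isT isT.
  rewrite /s10 /qcf /= in e2.
  rewrite ?mul0r ?mulr0 ?add0r ?addr0 ?oppr0 ?mul1r ?mulr1 in e2.
  have e3 := H 0 5 3 isT isT isT.
  rewrite /s10 /qcf /= in e3.
  rewrite ?mul0r ?mulr0 ?add0r ?addr0 ?oppr0 ?mul1r ?mulr1 in e3.
  have e4 := H 0 6 4 isT isT isT.
  rewrite /s10 /qcf /= in e4.
  rewrite ?mul0r ?mulr0 ?add0r ?addr0 ?oppr0 ?mul1r ?mulr1 in e4.
  have e5 := H 0 7 5 isT isT isT.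
  rewrite /s10 /qcf /= in e5.
  rewrite ?mul0r ?mulr0 ?add0r ?addr0 ?oppr0 ?mul1r ?mulr1 in e5.
  have e6 := H 0 8 6 isT isT isT.
  rewrite /s10 /qcf /= in e6.
  rewrite ?mul0r ?mulr0 ?add0r ?addr0 ?oppr0 ?mul1r ?mulr1 in e6.
  clear -e0 e1 e2 e3 e4 e5 e6; by repeat split; lra.
}
have [z2_0 [z3_1 [z4_2 [z5_3 [z6_4 [z7_5 [z8_6 z9_7]]]]]]] : d 2 0 = 0 /\ d 3 1 = 0 /\ d 4 2 = 0 /\ d 5 3 = 0 /\ d 6 4 = 0 /\ d 7 5 = 0 /\ d 8 6 = 0 /\ d 9 7 = 0.
{
  have e0 := H 0 1 0 isT isT isT.
  rewrite /s10 /qcf /= in e0.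
  rewrite ?mul0r ?mulr0 ?add0r ?addr0 ?oppr0 ?mul1r ?mulr1 in e0.
  have e1 := H 0 2 1 isT isT isT.
  rewrite /s10 /qcf /= in e1.
  rewrite ?mul0r ?mulr0 ?add0r ?addr0 ?oppr0 ?mul1r ?mulr1 in e1.
  have e2 := H 0 3 2 isT isT isT.
  rewrite /s10 /qcf /= in e2.
  rewrite ?mul0r ?mulr0 ?add0r ?addr0 ?oppr0 ?mul1r ?mulr1 in e2.
  have e3 := H 0 4 3 isT isT isT.
  rewrite /s10 /qcf /= in e3.
  rewrite ?mul0r ?mulr0 ?add0r ?addr0 ?oppr0 ?mul1r ?mulr1 in e3.
  have e4 := H 0 5 4 isT isT isT.
  rewrite /s10 /qcf /= in e4.
  rewrite ?mul0r ?mulr0 ?add0r ?addr0 ?oppr0 ?mul1r ?mulr1 in e4.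
  have e5 := H 0 6 5 isT isT isT.
  rewrite /s10 /qcf /= in e5.
  rewrite ?mul0r ?mulr0 ?add0r ?addr0 ?oppr0 ?mul1r ?mulr1 in e5.
  have e6 := H 0 7 6 isT isT isT.
  rewrite /s10 /qcf /= in e6.
  rewrite ?mul0r ?mulr0 ?add0r ?addr0 ?oppr0 ?mul1r ?mulr1 in e6.
  have e7 := H 0 8 7 isT isT isT.
  rewrite /s10 /qcf /= in e7.
  rewrite ?mul0r ?mulr0 ?add0r ?addr0 ?oppr0 ?mul1r ?mulr1 in e7.
  clear -e0 e1 e2 e3 e4 e5 e6 e7; by repeat split; lra.
}
have [z1_0 [z2_1 [z3_2 [z4_3 [z5_4 [z6_5 [z7_6 [z8_7 z9_8]]]]]]]] : d 1 0 = 0 /\ d 2 1 = 0 /\ d 3 2 = 0 /\ d 4 3 = 0 /\ d 5 4 = 0 /\ d 6 5 = 0 /\ d 7 6 = 0 /\ d 8 7 = 0 /\ d 9 8 = 0.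
{
  have e0 := H 0 1 1 isT isT isT.
  rewrite /s10 /qcf /= in e0.
  rewrite ?mul0r ?mulr0 ?add0r ?addr0 ?oppr0 ?mul1r ?mulr1 in e0.
  have e1 := H 0 2 2 isT isT isT.
  rewrite /s10 /qcf /= in e1.
  rewrite ?mul0r ?mulr0 ?add0r ?addr0 ?oppr0 ?mul1r ?mulr1 in e1.
  have e2 := H 0 3 3 isT isT isT.
  rewrite /s10 /qcf /= in e2.
  rewrite ?mul0r ?mulr0 ?add0r ?addr0 ?oppr0 ?mul1r ?mulr1 in e2.
  have e3 := H 0 4 4 isT isT isT.
  rewrite /s10 /qcf /= in e3.
  rewrite ?mul0r ?mulr0 ?add0r ?addr0 ?oppr0 ?mul1r ?mulr1 in e3.
  have e4 := H 0 5 5 isT isT isT.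
  rewrite /s10 /qcf /= in e4.
  rewrite ?mul0r ?mulr0 ?add0r ?addr0 ?oppr0 ?mul1r ?mulr1 in e4.
  have e5 := H 0 6 6 isT isT isT.
  rewrite /s10 /qcf /= in e5.
  rewrite ?mul0r ?mulr0 ?add0r ?addr0 ?oppr0 ?mul1r ?mulr1 in e5.
  have e6 := H 0 7 7 isT isT isT.
  rewrite /s10 /qcf /= in e6.
  rewrite ?mul0r ?mulr0 ?add0r ?addr0 ?oppr0 ?mul1r ?mulr1 in e6.
  have e7 := H 0 8 8 isT isT isT.
  rewrite /s10 /qcf /= in e7.
  rewrite ?mul0r ?mulr0 ?add0r ?addr0 ?oppr0 ?mul1r ?mulr1 in e7.
  have e8 := H 1 2 3 isT isT isT.
  rewrite /s10 /qcf /= in e8.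
  rewrite ?z5_3 in e8.
  rewrite ?mul0r ?mulr0 ?add0r ?addr0 ?oppr0 ?mul1r ?mulr1 in e8.
  clear -e0 e1 e2 e3 e4 e5 e6 e7 e8; by repeat split; lra.
}
have [w1 [w2 [w3 [w4 [w5 [w6 [w7 [w8 w9]]]]]]]] : d 1 1 = 2%:R * d 0 0 /\ d 2 2 = 3%:R * d 0 0 /\ d 3 3 = 4%:R * d 0 0 /\ d 4 4 = 5%:R * d 0 0 /\ d 5 5 = 6%:R * d 0 0 /\ d 6 6 = 7%:R * d 0 0 /\ d 7 7 = 8%:R * d 0 0 /\ d 8 8 = 9%:R * d 0 0 /\ d 9 9 = 10%:R * d 0 0.
{
  have e0 := H 0 1 2 isT isT isT.
  rewrite /s10 /qcf /= in e0.
  rewrite ?mul0r ?mulr0 ?add0r ?addr0 ?oppr0 ?mul1r ?mulr1 in e0.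
  have e1 := H 0 2 3 isT isT isT.
  rewrite /s10 /qcf /= in e1.
  rewrite ?mul0r ?mulr0 ?add0r ?addr0 ?oppr0 ?mul1r ?mulr1 in e1.
  have e2 := H 0 3 4 isT isT isT.
  rewrite /s10 /qcf /= in e2.
  rewrite ?mul0r ?mulr0 ?add0r ?addr0 ?oppr0 ?mul1r ?mulr1 in e2.
  have e3 := H 0 4 5 isT isT isT.
  rewrite /s10 /qcf /= in e3.
  rewrite ?mul0r ?mulr0 ?add0r ?addr0 ?oppr0 ?mul1r ?mulr1 in e3.
  have e4 := H 0 5 6 isT isT isT.
  rewrite /s10 /qcf /= in e4.
  rewrite ?mul0r ?mulr0 ?add0r ?addr0 ?oppr0 ?mul1r ?mulr1 in e4.
  have e5 := H 0 6 7 isT isT isT.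
  rewrite /s10 /qcf /= in e5.
  rewrite ?mul0r ?mulr0 ?add0r ?addr0 ?oppr0 ?mul1r ?mulr1 in e5.
  have e6 := H 0 7 8 isT isT isT.
  rewrite /s10 /qcf /= in e6.
  rewrite ?mul0r ?mulr0 ?add0r ?addr0 ?oppr0 ?mul1r ?mulr1 in e6.
  have e7 := H 0 8 9 isT isT isT.
  rewrite /s10 /qcf /= in e7.
  rewrite ?mul0r ?mulr0 ?add0r ?addr0 ?oppr0 ?mul1r ?mulr1 in e7.
  have e8 := H 1 2 4 isT isT isT.
  rewrite /s10 /qcf /= in e8.
  rewrite ?z5_4 in e8.
  rewrite ?mul0r ?mulr0 ?add0r ?addr0 ?oppr0 ?mul1r ?mulr1 in e8.
  clear -e0 e1 e2 e3 e4 e5 e6 e7 e8; by repeat split; lra.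
}
have [ta tb] : a * a * d 0 0 = 0 /\ b * b * d 0 0 = 0.
{
  have e1_2_4 := H 0 1 3 isT isT isT.
  rewrite /s10 /qcf /= in e1_2_4.
  rewrite ?mul0r ?mulr0 ?add0r ?addr0 ?oppr0 ?mul1r ?mulr1 in e1_2_4.
  have e1_2_4a := congr1 (fun x => a * x) e1_2_4.
  have e1_2_4b := congr1 (fun x => b * x) e1_2_4.
  have e1_2_5 := H 0 1 4 isT isT isT.
  rewrite /s10 /qcf /= in e1_2_5.
  rewrite ?mul0r ?mulr0 ?add0r ?addr0 ?oppr0 ?mul1r ?mulr1 in e1_2_5.
  have e1_3_5 := H 0 2 4 isT isT isT.
  rewrite /s10 /qcf /= in e1_3_5.
  rewrite ?mul0r ?mulr0 ?add0r ?addr0 ?oppr0 ?mul1r ?mulr1 in e1_3_5.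
  have e1_3_5a := congr1 (fun x => a * x) e1_3_5.
  have e1_3_5b := congr1 (fun x => b * x) e1_3_5.
  have e1_3_6 := H 0 2 5 isT isT isT.
  rewrite /s10 /qcf /= in e1_3_6.
  rewrite ?mul0r ?mulr0 ?add0r ?addr0 ?oppr0 ?mul1r ?mulr1 in e1_3_6.
  have e1_4_6 := H 0 3 5 isT isT isT.
  rewrite /s10 /qcf /= in e1_4_6.
  rewrite ?mul0r ?mulr0 ?add0r ?addr0 ?oppr0 ?mul1r ?mulr1 in e1_4_6.
  have e1_4_6a := congr1 (fun x => a * x) e1_4_6.
  have e1_4_6b := congr1 (fun x => b * x) e1_4_6.
  have e1_4_7 := H 0 3 6 isT isT isT.
  rewrite /s10 /qcf /= in e1_4_7.
  rewrite ?mul0r ?mulr0 ?add0r ?addr0 ?oppr0 ?mul1r ?mulr1 in e1_4_7.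
  have e1_5_7 := H 0 4 6 isT isT isT.
  rewrite /s10 /qcf /= in e1_5_7.
  rewrite ?mul0r ?mulr0 ?add0r ?addr0 ?oppr0 ?mul1r ?mulr1 in e1_5_7.
  have e1_5_7a := congr1 (fun x => a * x) e1_5_7.
  have e1_5_7b := congr1 (fun x => b * x) e1_5_7.
  have e1_5_8 := H 0 4 7 isT isT isT.
  rewrite /s10 /qcf /= in e1_5_8.
  rewrite ?mul0r ?mulr0 ?add0r ?addr0 ?oppr0 ?mul1r ?mulr1 in e1_5_8.
  have e1_6_8 := H 0 5 7 isT isT isT.
  rewrite /s10 /qcf /= in e1_6_8.
  rewrite ?mul0r ?mulr0 ?add0r ?addr0 ?oppr0 ?mul1r ?mulr1 in e1_6_8.
  have e1_6_8a := congr1 (fun x => a * x) e1_6_8.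
  have e1_6_8b := congr1 (fun x => b * x) e1_6_8.
  have e1_6_9 := H 0 5 8 isT isT isT.
  rewrite /s10 /qcf /= in e1_6_9.
  rewrite ?mul0r ?mulr0 ?add0r ?addr0 ?oppr0 ?mul1r ?mulr1 in e1_6_9.
  have e1_7_9 := H 0 6 8 isT isT isT.
  rewrite /s10 /qcf /= in e1_7_9.
  rewrite ?mul0r ?mulr0 ?add0r ?addr0 ?oppr0 ?mul1r ?mulr1 in e1_7_9.
  have e1_7_9a := congr1 (fun x => a * x) e1_7_9.
  have e1_7_9b := congr1 (fun x => b * x) e1_7_9.
  have e2_3_6 := H 1 2 5 isT isT isT.
  rewrite /s10 /qcf /= in e2_3_6.
  rewrite ?mul0r ?mulr0 ?add0r ?addr0 ?oppr0 ?mul1r ?mulr1 in e2_3_6.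
  rewrite ?w1 ?w2 ?w5 in e2_3_6.
  have e2_3_6a := congr1 (fun x => a * x) e2_3_6.
  have e2_3_6b := congr1 (fun x => b * x) e2_3_6.
  have e2_3_7 := H 1 2 6 isT isT isT.
  rewrite /s10 /qcf /= in e2_3_7.
  rewrite ?mul0r ?mulr0 ?add0r ?addr0 ?oppr0 ?mul1r ?mulr1 in e2_3_7.
  have e2_5_8 := H 1 4 7 isT isT isT.
  rewrite /s10 /qcf /= in e2_5_8.
  rewrite ?mul0r ?mulr0 ?add0r ?addr0 ?oppr0 ?mul1r ?mulr1 in e2_5_8.
  rewrite ?w1 ?w4 ?w7 in e2_5_8.
  have e2_5_8a := congr1 (fun x => a * x) e2_5_8.
  have e2_5_8b := congr1 (fun x => b * x) e2_5_8.
  have e2_5_9 := H 1 4 8 isT isT isT.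
  rewrite /s10 /qcf /= in e2_5_9.
  rewrite ?mul0r ?mulr0 ?add0r ?addr0 ?oppr0 ?mul1r ?mulr1 in e2_5_9.
  clear -e1_2_4 e1_2_4a e1_2_4b e1_2_5 e1_3_5 e1_3_5a e1_3_5b e1_3_6 e1_4_6 e1_4_6a e1_4_6b e1_4_7 e1_5_7 e1_5_7a e1_5_7b e1_5_8 e1_6_8 e1_6_8a e1_6_8b e1_6_9 e1_7_9 e1_7_9a e1_7_9b e2_3_6 e2_3_6a e2_3_6b e2_3_7 e2_5_8 e2_5_8a e2_5_8b e2_5_9; by split; lra.
}
have t0 : d 0 0 = 0.
  case: (eqVneq (d 0 0) 0) => // nz.
  have ha : a = 0 by apply/eqP; move/eqP: ta; rewrite !mulf_eq0 (negbTE nz) orbF orbb.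
  have hb : b = 0 by apply/eqP; move/eqP: tb; rewrite !mulf_eq0 (negbTE nz) orbF orbb.
  by case: ab; rewrite ha hb.
have z1_1 : d 1 1 = 0 by rewrite w1 t0 mulr0.
have z2_2 : d 2 2 = 0 by rewrite w2 t0 mulr0.
have z3_3 : d 3 3 = 0 by rewrite w3 t0 mulr0.
have z4_4 : d 4 4 = 0 by rewrite w4 t0 mulr0.
have z5_5 : d 5 5 = 0 by rewrite w5 t0 mulr0.
have z6_6 : d 6 6 = 0 by rewrite w6 t0 mulr0.
have z7_7 : d 7 7 = 0 by rewrite w7 t0 mulr0.
have z8_8 : d 8 8 = 0 by rewrite w8 t0 mulr0.
have z9_9 : d 9 9 = 0 by rewrite w9 t0 mulr0.
move=> i k ki i10.
case: i ki i10 => [|i] ki i10.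
{
  move: k ki; case=> [|k] ki; first exact: t0.
  by move: ki; rewrite ?ltnS ?ltn0. }
case: i ki i10 => [|i] ki i10.
{
  move: k ki; case=> [|k] ki; first exact: z1_0.
  move: k ki; case=> [|k] ki; first exact: z1_1.
  by move: ki; rewrite ?ltnS ?ltn0. }
case: i ki i10 => [|i] ki i10.
{
  move: k ki; case=> [|k] ki; first exact: z2_0.
  move: k ki; case=> [|k] ki; first exact: z2_1.
  move: k ki; case=> [|k] ki; first exact: z2_2.
  by move: ki; rewrite ?ltnS ?ltn0. }
case: i ki i10 => [|i] ki i10.
{
  move: k ki; case=> [|k] ki; first exact: z3_0.
  move: k ki; case=> [|k] ki; first exact: z3_1.
  move: k ki; case=> [|k] ki; first exact: z3_2.
  move: k ki; case=> [|k] ki; first exact: z3_3.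
  by move: ki; rewrite ?ltnS ?ltn0. }
case: i ki i10 => [|i] ki i10.
{
  move: k ki; case=> [|k] ki; first exact: z4_0.
  move: k ki; case=> [|k] ki; first exact: z4_1.
  move: k ki; case=> [|k] ki; first exact: z4_2.
  move: k ki; case=> [|k] ki; first exact: z4_3.
  move: k ki; case=> [|k] ki; first exact: z4_4.
  by move: ki; rewrite ?ltnS ?ltn0. }
case: i ki i10 => [|i] ki i10.
{
  move: k ki; case=> [|k] ki; first exact: z5_0.
  move: k ki; case=> [|k] ki; first exact: z5_1.
  move: k ki; case=> [|k] ki; first exact: z5_2.
  move: k ki; case=> [|k] ki; first exact: z5_3.
  move: k ki; case=> [|k] ki; first exact: z5_4.
  move: k ki; case=> [|k] ki; first exact: z5_5.
  by move: ki; rewrite ?ltnS ?ltn0. }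
case: i ki i10 => [|i] ki i10.
{
  move: k ki; case=> [|k] ki; first exact: z6_0.
  move: k ki; case=> [|k] ki; first exact: z6_1.
  move: k ki; case=> [|k] ki; first exact: z6_2.
  move: k ki; case=> [|k] ki; first exact: z6_3.
  move: k ki; case=> [|k] ki; first exact: z6_4.
  move: k ki; case=> [|k] ki; first exact: z6_5.
  move: k ki; case=> [|k] ki; first exact: z6_6.
  by move: ki; rewrite ?ltnS ?ltn0. }
case: i ki i10 => [|i] ki i10.
{
  move: k ki; case=> [|k] ki; first exact: z7_0.
  move: k ki; case=> [|k] ki; first exact: z7_1.
  move: k ki; case=> [|k] ki; first exact: z7_2.
  move: k ki; case=> [|k] ki; first exact: z7_3.
  move: k ki; case=> [|k] ki; first exact: z7_4.
  move: k ki; case=> [|k] ki; first exact: z7_5.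
  move: k ki; case=> [|k] ki; first exact: z7_6.
  move: k ki; case=> [|k] ki; first exact: z7_7.
  by move: ki; rewrite ?ltnS ?ltn0. }
case: i ki i10 => [|i] ki i10.
{
  move: k ki; case=> [|k] ki; first exact: z8_0.
  move: k ki; case=> [|k] ki; first exact: z8_1.
  move: k ki; case=> [|k] ki; first exact: z8_2.
  move: k ki; case=> [|k] ki; first exact: z8_3.
  move: k ki; case=> [|k] ki; first exact: z8_4.
  move: k ki; case=> [|k] ki; first exact: z8_5.
  move: k ki; case=> [|k] ki; first exact: z8_6.
  move: k ki; case=> [|k] ki; first exact: z8_7.
  move: k ki; case=> [|k] ki; first exact: z8_8.
  by move: ki; rewrite ?ltnS ?ltn0. }
case: i ki i10 => [|i] ki i10.
{
  move: k ki; case=> [|k] ki; first exact: z9_0.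
  move: k ki; case=> [|k] ki; first exact: z9_1.
  move: k ki; case=> [|k] ki; first exact: z9_2.
  move: k ki; case=> [|k] ki; first exact: z9_3.
  move: k ki; case=> [|k] ki; first exact: z9_4.
  move: k ki; case=> [|k] ki; first exact: z9_5.
  move: k ki; case=> [|k] ki; first exact: z9_6.
  move: k ki; case=> [|k] ki; first exact: z9_7.
  move: k ki; case=> [|k] ki; first exact: z9_8.
  move: k ki; case=> [|k] ki; first exact: z9_9.
  by move: ki; rewrite ?ltnS ?ltn0. }
by lia.
Qed.
End S.

Section S2.
Variable R : realType.

Lemma upper_nil (D : 'M[R]_10) : (forall i k : 'I_10, (k <= i)%N -> D i k = 0) -> D ^+ 10 = 0.
Proof.
move=> HD.
have key : forall m (i k : 'I_10), (k < i + m)%N -> (D ^+ m) i k = 0.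
  elim=> [|m IH] i k hk.
    have nik : i != k by apply/eqP => e; move: hk; rewrite e addn0 ltnn.
    by rewrite expr0 mxE (negbTE nik) mulr0n.
  rewrite exprSr mxE big1 // => l _.
  case: (ltnP l (i + m)) => hl; first by rewrite IH // mul0r.
  by rewrite HD ?mulr0 //; lia.
by apply/matrixP => i k; rewrite key ?mxE //; have := ltn_ord k; lia.
Qed.

Lemma qcf00 (i j m : nat) : (i < 10)%N -> (j < 10)%N -> (m < 10)%N ->
  qcf (0 : R) 0 i j m * (m.+1)%:R = qcf 0 0 i j m * (i.+1 + j.+1)%:R.
Proof.
move=> hi hj hm.
case: i hi => [|[|[|[|[|[|[|[|[|[|i]]]]]]]]]] hi; try by lia.
all: case: j hj => [|[|[|[|[|[|[|[|[|[|j]]]]]]]]]] hj; try by lia.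
all: case: m hm => [|[|[|[|[|[|[|[|[|[|m]]]]]]]]]] hm; try by lia.
all: rewrite /qcf /=.
all: first [ reflexivity | by rewrite ?mul0r ?oppr0 ?mul0r | ring ].
Qed.

Definition Dg : 'M[R]_10 := \matrix_(i, j) ((i == j)%:R * (i.+1)%:R).

Lemma mulDg (u : 'rV[R]_10) m : (u *m Dg) 0 m = u 0 m * (m.+1)%:R.
Proof.
rewrite mxE (bigD1 m) //= big1 ?addr0 => [|l nl]; rewrite mxE.
  by rewrite eqxx mul1r.
by rewrite (negbTE nl) mul0r mulr0.
Qed.

Lemma Dg_der : is_derivation (qbr 0 0) Dg.
Proof.
move=> x y; apply/rowP => m.
rewrite mulDg addE !qbrE mulr_suml -big_split /=; apply: eq_bigr => i _.
rewrite mulr_suml -big_split /=; apply: eq_bigr => j _.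
rewrite !mulDg -mulrA qcf00 ?ltn_ord // natrD; ring.
Qed.

Lemma uDg : (delta_mx 0 ord0 : 'rV[R]_10) *m Dg = delta_mx 0 ord0.
Proof.
apply/rowP => j; rewrite mulDg !mxE.
by case: (eqVneq ord0 j) => [<-|nj] /=; rewrite ?mulr1 ?mul0r.
Qed.

Lemma Dg_not_nil : ~ nilpotent_mx Dg.
Proof.
case=> k hk.
have uD : forall k, (delta_mx 0 ord0 : 'rV[R]_10) *m Dg ^+ k = delta_mx 0 ord0.
  elim=> [|n IH]; first by rewrite expr0 mulmx1.
  by rewrite exprSr -mulmxE mulmxA IH uDg.
have := uD k; rewrite hk mulmx0 => /rowP/(_ ord0); rewrite !mxE eqxx /= => /eqP.
by rewrite eq_sym oner_eq0.
Qed.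
End S2.

Theorem proposition4p4 (R : realType) (a b : R) :
  char_nilpotent (qbr a b) <-> (a, b) <> (0, 0).
Proof.
split.
  move=> H [ha hb]; subst a b.
  exact: (Dg_not_nil (H _ (@Dg_der R))).
move=> ab D HD; exists 10%N; apply: upper_nil => i k ki.
have := core (deq HD) ab ki (ltn_ord i).
by rewrite /dd !inord_val.
Qed.
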